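(* Let $(W,S)$ be a Coxeter system with $S=\{s_0,\dots,s_n\}$ finite, and let $\widetilde\varphi:G_{n,2}\to W$ be the epimorphism with $\widetilde\varphi(\alpha_i)=s_i$; let $H=\ker\widetilde\varphi$. Then $\widetilde{\mathfrak X}_{n,2}(H)$ is a simplicial complex (all multiplicities $1$) and it is isomorphic to the Coxeter complex $X(W,S)$.
   Context: A Coxeter system $(W,S)$: $W$ has presentation $\langle S\mid (st)^{m_{st}},\ s,t\in S\rangle$ with $m_{ss}=1$, $m_{st}\in\{2,3,\dots\}\cup\{\infty\}$ for $s\neq t$ (no relation when $\infty$). For $J\subseteq\{0,\dots,n\}$, $W_J=\langle s_i:i\in J\rangle$ and $\widehat J=\{0,\dots,n\}\setminus J$, $\widehat i=\widehat{\{i\}}$. The Coxeter complex $X(W,S)$ has as vertices the cosets $W_{\widehat i}w$ ($i\in\{0,\dots,n\}$, $w\in W$) and as cells the sets $\{W_{\widehat i}w:i\in J\}$ for $w\in W$, $J\subseteq\{0,\dots,n\}$. $G_{n,2}=\langle\alpha_0,\dots,\alpha_n\mid\alpha_i^2=e\rangle$; $K_J=\langle\alpha_j:j\in J\rangle$. For $H\le G_{n,2}$, $[K_{\widehat J}g]_H=\{K_{\widehat J}gh:h\in H\}$; the multicomplex $\widetilde{\mathfrak X}_{n,2}(H)$ has multicells $[K_{\widehat J}g]_H$ of dimension $|J|-1$, the multicell $[K_{\widehat J}g]_H$ lying over the cell $\{[K_{\widehat i}g]_H:i\in J\}$, and the multiplicity of a cell is the number of multicells over it. *)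

(* Defs.v *)
From mathcomp Require Import all_boot.
Set Implicit Arguments. Unset Strict Implicit. Unset Printing Implicit Defensive.

Record group := Group {
  carrier :> Type;
  gmul : carrier -> carrier -> carrier;
  gone : carrier;
  ginv : carrier -> carrier;
  gmulA : forall x y z, gmul x (gmul y z) = gmul (gmul x y) z;
  gmul1 : forall x, gmul gone x = x;
  gmulV : forall x, gmul (ginv x) x = gone }.

(* ---------- G_{n,2} = free product of n+1 copies of Z/2 ----------
   Elements are reduced words in the letters 'I_n.+1 (no two equal
   adjacent letters); the letter i is alpha_i. *)
Section Gn2.
Variable n : nat.
Notation L := 'I_n.+1.

Definition reduced (s : seq L) : bool := sorted (fun a b => a != b) s.

Definition push (a : L) (s : seq L) : seq L :=
  if s is b :: t then (if a == b then t else a :: s) else [:: a].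

Lemma push_reduced a s : reduced s -> reduced (push a s).
Proof.
case: s => [|b t] //= Hs.
case: ifP => [_|/negbT Hab]; first by case: t Hs => //= c t /andP [].
by rewrite /reduced /= Hab.
Qed.

Definition Gn2 := {s : seq L | reduced s}.

Lemma foldr_push_reduced (x y : seq L) :
  reduced y -> reduced (foldr push y x).
Proof. by elim: x => //= a x IH Hy; apply: push_reduced; apply: IH. Qed.

Lemma foldl_push_reduced (x y : seq L) :
  reduced y -> reduced (foldl (fun acc a => push a acc) y x).
Proof. by elim: x y => //= a x IH y Hy; apply: IH; apply: push_reduced. Qed.

Definition mulG (x y : Gn2) : Gn2 :=
  exist _ (foldr push (sval y) (sval x)) (foldr_push_reduced (sval x) (svalP y)).
Definition oneG : Gn2 := exist _ [::] (isT : reduced [::]).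
Definition invG (x : Gn2) : Gn2 :=
  exist _ (foldl (fun acc a => push a acc) [::] (sval x))
        (foldl_push_reduced (sval x) (isT : reduced [::])).
Definition alpha (i : L) : Gn2 := exist _ [:: i] (isT : reduced [:: i]).
Definition expG (x : Gn2) (k : nat) : Gn2 := iter k (mulG x) oneG.

(* K_J = < alpha_j : j in J > : the reduced words using only letters of J *)
Definition inK (J : {set L}) (x : Gn2) : Prop := all (fun a => a \in J) (sval x).
Definition cosetK (J : {set L}) (g : Gn2) : Gn2 -> Prop :=
  fun x => inK J (mulG x (invG g)).

(* Multicell [K_{\hat J} g]_H = { K_{\hat J} g h : h in H }, as a set of
   subsets of G_{n,2} *)
Definition multicell (H : Gn2 -> Prop) (J : {set L}) (g : Gn2)
  : (Gn2 -> Prop) -> Prop :=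
  fun X => exists h, H h /\ forall x, X x <-> cosetK (~: J) (mulG g h) x.

Definition mc_eq (H : Gn2 -> Prop) (J : {set L}) g (J' : {set L}) g' : Prop :=
  forall X, multicell H J g X <-> multicell H J' g' X.

(* vertices [K_{\hat i} g]_H, represented by pairs (i, g) *)
Definition vertX (H : Gn2 -> Prop) (a b : L * Gn2) : Prop :=
  mc_eq H [set a.1] a.2 [set b.1] b.2.

(* the cell { [K_{\hat i} g]_H : i in J } over the multicell [K_{\hat J} g]_H,
   as a (representative-closed) set of vertices *)
Definition cellX (H : Gn2 -> Prop) (J : {set L}) (g : Gn2) (v : L * Gn2) : Prop :=
  exists2 i, i \in J & vertX H v (i, g).

Definition multiplicity_one (H : Gn2 -> Prop) : Prop :=
  forall J g J' g', (forall v, cellX H J g v <-> cellX H J' g' v) ->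
    mc_eq H J g J' g'.

(* Coxeter matrix; None stands for m_st = infinity *)
Definition coxeter_matrix (m : L -> L -> option nat) : Prop :=
  [/\ forall i, m i i = Some 1,
      forall i j, m i j = m j i &
      forall i j k, i != j -> m i j = Some k -> 2 <= k].

Inductive nclos (m : L -> L -> option nat) : Gn2 -> Prop :=
| nc_rel i j k : m i j = Some k -> nclos m (expG (mulG (alpha i) (alpha j)) k)
| nc_one : nclos m oneG
| nc_mul x y : nclos m x -> nclos m y -> nclos m (mulG x y)
| nc_inv x : nclos m x -> nclos m (invG x)
| nc_conj g x : nclos m x -> nclos m (mulG (invG g) (mulG x g)).

Definition phi (W : group) (s : L -> W) (g : Gn2) : W :=
  foldr (fun i acc => gmul (s i) acc) (gone W) (sval g).

(* (W,S) with S = {s_0..s_n} is a Coxeter system with matrix m, i.e.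
   W = < S | (s_i s_j)^{m_ij} > : the s_i are involutions (so phi is a
   homomorphism G_{n,2} -> W), phi is onto, and ker phi is the normal
   closure of the relators. *)
Definition coxeter_system (W : group) (s : L -> W) (m : L -> L -> option nat) : Prop :=
  [/\ forall i, gmul (s i) (s i) = gone W,
      forall w : W, exists g, phi s g = w &
      forall g, phi s g = gone W <-> nclos m g].

Definition kerphi (W : group) (s : L -> W) : Gn2 -> Prop :=
  fun g => phi s g = gone W.

Inductive inWJ (W : group) (s : L -> W) (J : {set L}) : W -> Prop :=
| wj_one : inWJ s J (gone W)
| wj_gen j : j \in J -> inWJ s J (s j)
| wj_mul x y : inWJ s J x -> inWJ s J y -> inWJ s J (gmul x y)
| wj_inv x : inWJ s J x -> inWJ s J (ginv x).

Definition cosetW (W : group) (s : L -> W) (J : {set L}) (w : W) : W -> Prop :=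
  fun x => inWJ s J (gmul x (ginv w)).

(* vertices W_{\hat i} w, represented by pairs (i, w) *)
Definition vertW (W : group) (s : L -> W) (a b : L * W) : Prop :=
  forall x, cosetW s (~: [set a.1]) a.2 x <-> cosetW s (~: [set b.1]) b.2 x.

Definition cellW (W : group) (s : L -> W) (J : {set L}) (w : W) (v : L * W) : Prop :=
  exists2 i, i \in J & vertW s v (i, w).

(* isomorphism between the (simplicial) complex underlying the multicomplex
   and the Coxeter complex: a bijection of vertices (up to the identification
   of representatives) carrying cells exactly onto cells *)
Definition complex_iso (H : Gn2 -> Prop) (W : group) (s : L -> W)
  (F : L * Gn2 -> L * W) : Prop :=
  [/\ forall a b, vertX H a b <-> vertW s (F a) (F b),
      forall b, exists a, vertW s (F a) b,
      forall J g, exists J' w, forall b,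
         (exists2 a, cellX H J g a & vertW s (F a) b) <-> cellW s J' w b &
      forall J' w, exists J g, forall b,
         (exists2 a, cellX H J g a & vertW s (F a) b) <-> cellW s J' w b].

End Gn2.

(* Main.v *)
Require Import Defs.
From mathcomp Require Import all_boot.
From mathcomp Require Import all_algebra all_field.
From mathcomp.algebra_tactics Require Import ring.
From Stdlib Require Import ClassicalEpsilon FunctionalExtensionality Classical.
Set Implicit Arguments. Unset Strict Implicit. Unset Printing Implicit Defensive.

Notation "x ⊙ y" := (gmul x y) (at level 40, left associativity).

Section GroupLemmas.
Variable G : group.
Implicit Types x y z : G.

Lemma gmulVr x : x ⊙ ginv x = gone G.
Proof.
have yy : (x ⊙ ginv x) ⊙ (x ⊙ ginv x) = x ⊙ ginv x.
  by rewrite -gmulA (gmulA (ginv x)) gmulV gmul1.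
set y := x ⊙ ginv x in yy *.
by rewrite -(gmul1 y) -(gmulV y) -gmulA yy.
Qed.

Lemma gmulr1 x : x ⊙ gone G = x.
Proof. by rewrite -(gmulV x) gmulA gmulVr gmul1. Qed.

Lemma gmulKV x y : ginv x ⊙ (x ⊙ y) = y.
Proof. by rewrite gmulA gmulV gmul1. Qed.

Lemma gmulVK x y : x ⊙ (ginv x ⊙ y) = y.
Proof. by rewrite gmulA gmulVr gmul1. Qed.

Lemma gmulrK x y : x ⊙ y ⊙ ginv y = x.
Proof. by rewrite -gmulA gmulVr gmulr1. Qed.

Lemma gmulrVK x y : x ⊙ ginv y ⊙ y = x.
Proof. by rewrite -gmulA gmulV gmulr1. Qed.

Lemma gmulI x y z : x ⊙ y = x ⊙ z -> y = z.
Proof. by move=> e; rewrite -(gmulKV x y) e gmulKV. Qed.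

Lemma gmulIr x y z : y ⊙ x = z ⊙ x -> y = z.
Proof. by move=> e; rewrite -(gmulrK y x) e gmulrK. Qed.

Lemma ginv_uniq x y : x ⊙ y = gone G -> y = ginv x.
Proof. by move=> e; apply: (gmulI (x := x)); rewrite e gmulVr. Qed.

Lemma ginvK x : ginv (ginv x) = x.
Proof. by symmetry; apply: ginv_uniq; rewrite gmulV. Qed.

Lemma ginvM x y : ginv (x ⊙ y) = ginv y ⊙ ginv x.
Proof. by symmetry; apply: ginv_uniq; rewrite gmulA gmulrK gmulVr. Qed.

Lemma ginv1 : ginv (gone G) = gone G.
Proof. by symmetry; apply: ginv_uniq; rewrite gmul1. Qed.

Lemma ginv_inj x y : ginv x = ginv y -> x = y.
Proof. by move=> e; rewrite -(ginvK x) e ginvK. Qed.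

Lemma ginv_invol x : x ⊙ x = gone G -> ginv x = x.
Proof. by move=> e; symmetry; apply: ginv_uniq. Qed.

End GroupLemmas.

Section Words.
Variable n : nat.
Local Notation L := 'I_n.+1.

Definition red (l : seq L) : Gn2 n :=
  exist _ (foldr (@push n) [::] l) (foldr_push_reduced l (isT : reduced [::])).

Lemma foldl_push (x z : seq L) :
  foldl (fun acc a => push a acc) z x = foldr (@push n) z (rev x).
Proof.
elim: x z => //= a x IH z; by rewrite IH rev_cons -cats1 foldr_cat.
Qed.

Lemma push_invol a (u : seq L) : reduced u -> push a (push a u) = u.
Proof.
case: u => [|b t] /=; first by move=> _; rewrite eqxx.
case: (eqVneq a b) => [<-|nab] Hr.
  case: t Hr => [|c t] //=.
  by case/andP=> ac _; rewrite (negbTE ac).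
by rewrite /= eqxx.
Qed.

Lemma foldr_push_push z a (w : seq L) : reduced z ->
  foldr (@push n) z (push a w) = push a (foldr (@push n) z w).
Proof.
move=> Hz; case: w => [|b w] //=.
case: (eqVneq a b) => [<-|nab] /=; last by [].
by rewrite push_invol // foldr_push_reduced.
Qed.

Lemma foldr_push_assoc z (x y : seq L) : reduced z ->
  foldr (@push n) z (foldr (@push n) y x) = foldr (@push n) z (x ++ y).
Proof.
move=> Hz; elim: x => //= a x IH.
by rewrite foldr_push_push // IH.
Qed.

Lemma foldr_push_rev (l s : seq L) : foldr (@push n) (l ++ s) (rev l) = s.
Proof.
elim: l => //= a l IH.
by rewrite rev_cons -cats1 foldr_cat /= eqxx IH.
Qed.

Section Mon.
Variables (M : Type) (mop : M -> M -> M) (mone : M).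
Hypothesis mA : forall x y z, mop x (mop y z) = mop (mop x y) z.
Hypothesis m1l : forall x, mop mone x = x.
Hypothesis m1r : forall x, mop x mone = x.
Variable e : L -> M.
Hypothesis e2 : forall a, mop (e a) (e a) = mone.

Definition psi (l : seq L) : M := foldr (fun a acc => mop (e a) acc) mone l.

Lemma psi_cat x y : psi (x ++ y) = mop (psi x) (psi y).
Proof. by elim: x => /= [|a x IH]; rewrite ?m1l // IH mA. Qed.

Lemma psi_push a u : psi (push a u) = mop (e a) (psi u).
Proof.
case: u => [|b u] //=.
case: (eqVneq a b) => [<-|] //=.
by rewrite mA e2 m1l.
Qed.

Lemma psi_foldr_push x y : psi (foldr (@push n) y x) = mop (psi x) (psi y).
Proof. by elim: x => /= [|a x IH]; rewrite ?m1l // psi_push IH mA. Qed.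

Lemma psi_revK x : mop (psi (rev x)) (psi x) = mone.
Proof.
have := psi_foldr_push (rev x) (x ++ [::]).
by rewrite foldr_push_rev psi_cat /= m1r => <-.
Qed.

Lemma psi_revKr x : mop (psi x) (psi (rev x)) = mone.
Proof. by have := psi_revK (rev x); rewrite revK. Qed.

Definition psiG (g : Gn2 n) := psi (sval g).

Lemma psiG_mul x y : psiG (mulG x y) = mop (psiG x) (psiG y).
Proof. exact: psi_foldr_push. Qed.

Lemma psiG_inv x : psiG (invG x) = psi (rev (sval x)).
Proof. by rewrite /psiG /= foldl_push psi_foldr_push /= m1r. Qed.

Lemma psiG_exp x k : psiG (expG x k) = iter k (mop (psiG x)) mone.
Proof. by elim: k => //= k IH; rewrite psiG_mul IH. Qed.

Variable m : L -> L -> option nat.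
Hypothesis rel : forall i j k, m i j = Some k ->
  iter k (mop (mop (e i) (e j))) mone = mone.

Lemma nclos_psi g : nclos m g -> psiG g = mone.
Proof.
elim=> {g}.
- move=> i j k mij; rewrite psiG_exp psiG_mul /psiG /= !m1r; exact: rel.
- by [].
- by move=> x y _ Hx _ Hy; rewrite psiG_mul Hx Hy m1l.
- by move=> x _ Hx; rewrite psiG_inv -[LHS]m1r -Hx -/(psiG x) /psiG psi_revK.
- move=> g x _ Hx; rewrite psiG_mul psiG_mul Hx m1l psiG_inv; exact: psi_revK.
Qed.
End Mon.
End Words.

Section EqW.
Variable W : group.
Definition eqW (x y : W) : bool :=
  if excluded_middle_informative (x = y) then true else false.
Lemma eqWP (x y : W) : reflect (x = y) (eqW x y).
Proof. by rewrite /eqW; case: excluded_middle_informative => h; constructor. Qed.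
Lemma eqWxx (x : W) : eqW x x.
Proof. exact/eqWP. Qed.

Lemma eqW_conj (g t u : W) : eqW (ginv g ⊙ t ⊙ g) u = eqW t (g ⊙ u ⊙ ginv g).
Proof.
apply/eqWP/eqWP => [<-|->].
  by rewrite -!gmulA gmulVr gmulr1 gmulVK.
by rewrite -!gmulA gmulV gmulr1 gmulKV.
Qed.
End EqW.

Fixpoint xs (g : nat -> bool) (k : nat) : bool :=
  if k is k'.+1 then xs g k' (+) g k' else false.

Lemma xs_ext g h k : (forall e, g e = h e) -> xs g k = xs h k.
Proof. by move=> E; elim: k => //= k ->; rewrite E. Qed.

Lemma xs_add g a b : xs g (a + b) = xs g a (+) xs (fun e => g (a + e)) b.
Proof.
elim: b => /= [|b IH]; first by rewrite addn0 addbF.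
by rewrite addnS /= IH addbA.
Qed.

Lemma xs_S g k : xs g k.+1 = g 0 (+) xs (fun e => g e.+1) k.
Proof. by rewrite -add1n xs_add. Qed.

Lemma xs_pairs g k : xs (fun l => g (2 * l) (+) g (2 * l).+1) k = xs g (2 * k).
Proof. by elim: k => // k IH; rewrite mulnS /= IH !add0n add1n addbA. Qed.

Lemma xs_period g k : (forall e, g (k + e) = g e) -> xs g (k + k) = false.
Proof. by move=> E; rewrite xs_add (xs_ext _ E) addbb. Qed.

Section Coxeter.
Variable n : nat.
Local Notation L := 'I_n.+1.
Variables (W : group) (s : L -> W) (m : L -> L -> option nat).
Hypothesis sinv : forall i, s i ⊙ s i = gone W.
Hypothesis kerP : forall g, phi s g = gone W <-> nclos m g.

Definition phiL (l : seq L) : W := psi (@gmul W) (gone W) s l.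

Lemma phiL_cons a l : phiL (a :: l) = s a ⊙ phiL l.
Proof. by []. Qed.
Lemma phiL_cat x y : phiL (x ++ y) = phiL x ⊙ phiL y.
Proof. apply: psi_cat; [exact: gmulA | exact: gmul1]. Qed.
Lemma phiL_rev x : phiL (rev x) = ginv (phiL x).
Proof.
apply: ginv_uniq; apply: psi_revKr; [exact: gmulA|exact: gmul1|exact: gmulr1|exact: sinv].
Qed.
Lemma sV a : ginv (s a) = s a.
Proof. exact: ginv_invol. Qed.

Lemma phi_red l : phi s (red l) = phiL l.
Proof.
rewrite /phi /red /=.
have := psi_foldr_push (@gmulA W) (@gmul1 W) sinv l [::].
by rewrite /= gmulr1.
Qed.

Lemma phi_resp (M : Type) (mop : M -> M -> M) (mone : M)
  (mA : forall x y z, mop x (mop y z) = mop (mop x y) z)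
  (m1l : forall x, mop mone x = x) (m1r : forall x, mop x mone = x)
  (e : L -> M) (e2 : forall a, mop (e a) (e a) = mone)
  (rel : forall i j k, m i j = Some k -> iter k (mop (mop (e i) (e j))) mone = mone)
  x y : phiL x = phiL y -> psi mop mone e x = psi mop mone e y.
Proof.
move=> Exy.
have H1 : phi s (red (rev x ++ y)) = gone W.
  by rewrite phi_red phiL_cat phiL_rev Exy gmulV.
have := nclos_psi mA m1l m1r e2 rel (proj1 (kerP _) H1).
rewrite /psiG /= psi_foldr_push //= m1r psi_cat // => H2.
have := congr1 (mop (psi mop mone e x)) H2.
by rewrite mA psi_revKr // m1l m1r.
Qed.

(* the reflection cocycle monoid *)
Definition Mt := (W * (W -> bool))%type.
Definition mop (x y : Mt) : Mt :=
  (x.1 ⊙ y.1, fun t => x.2 t (+) y.2 (ginv x.1 ⊙ t ⊙ x.1)).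
Definition mone : Mt := (gone W, fun _ => false).
Definition eM (a : L) : Mt := (s a, fun t => eqW t (s a)).

Lemma mopA x y z : mop x (mop y z) = mop (mop x y) z.
Proof.
case: x => a f; case: y => b g; case: z => c h; rewrite /mop /=.
congr pair; first exact: gmulA.
apply: functional_extensionality => t.
by rewrite addbA ginvM -!gmulA.
Qed.

Lemma mop1l x : mop mone x = x.
Proof.
case: x => a f; rewrite /mop /=; congr pair; first exact: gmul1.
by apply: functional_extensionality => t; rewrite ginv1 gmul1 gmulr1.
Qed.

Lemma mop1r x : mop x mone = x.
Proof.
case: x => a f; rewrite /mop /=; congr pair; first exact: gmulr1.
by apply: functional_extensionality => t; rewrite addbF.
Qed.

Lemma eM2 a : mop (eM a) (eM a) = mone.
Proof.
rewrite /mop /=; congr pair; first exact: sinv.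
apply: functional_extensionality => t.
by rewrite eqW_conj sV -gmulA sinv gmulr1 addbb.
Qed.

Definition wp (w : W) (e : nat) : W := iter e (gmul w) (gone W).

Lemma wp_add w a b : wp w (a + b) = wp w a ⊙ wp w b.
Proof. by elim: a => /= [|a IH]; rewrite ?gmul1 // IH gmulA. Qed.

Lemma wpSr w e : wp w e.+1 = wp w e ⊙ w.
Proof. by rewrite -addn1 wp_add /= gmulr1. Qed.

Lemma iter_mop_fst (x : Mt) k : (iter k (mop x) mone).1 = wp x.1 k.
Proof. by elim: k => //= k ->. Qed.

Lemma iter_mop_snd (x : Mt) k t :
  (iter k (mop x) mone).2 t = xs (fun l => x.2 (iter l (fun u => ginv x.1 ⊙ u ⊙ x.1) t)) k.
Proof.
elim: k t => [//|k IH] t.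
rewrite iterS xs_S /= IH; congr addb; apply: xs_ext => e.
by rewrite -iterSr.
Qed.

Lemma iter_conj (w t : W) l :
  iter l (fun u => ginv w ⊙ u ⊙ w) t = ginv (wp w l) ⊙ t ⊙ wp w l.
Proof.
elim: l => [|l IH]; first by rewrite /= ginv1 gmul1 gmulr1.
by rewrite iterS IH wpSr ginvM !gmulA.
Qed.


Lemma wp_comm w l : wp w l ⊙ w = w ⊙ wp w l.
Proof. by rewrite -wpSr. Qed.

Lemma K_refl i j l :
  s i ⊙ ginv (wp (s i ⊙ s j) l) = wp (s i ⊙ s j) l ⊙ s i.
Proof.
set w := s i ⊙ s j.
elim: l => [|l IH]; first by rewrite /= ginv1 gmulr1 gmul1.
rewrite /wp iterS -/(wp w l) ginvM gmulA IH.
have -> : ginv w = s j ⊙ s i by rewrite /w ginvM !sV.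
rewrite !gmulA -(gmulA _ (s i) (s j)) -/w wp_comm.
by rewrite -!gmulA.
Qed.

Lemma rel_eM i j k : wp (s i ⊙ s j) k = gone W ->
  iter k (mop (mop (eM i) (eM j))) mone = mone.
Proof.
move=> Hk.
set x := mop (eM i) (eM j).
have x1 : x.1 = s i ⊙ s j by [].
rewrite (surjective_pairing (iter _ _ _)) /mone; congr pair.
  by rewrite iter_mop_fst x1.
apply: functional_extensionality => t.
rewrite iter_mop_snd x1.
set w := s i ⊙ s j.
pose g e := eqW t (wp w e ⊙ s i).
rewrite (xs_ext (h := fun l => g (2 * l) (+) g (2 * l).+1)); last first.
  move=> l; rewrite iter_conj /x /mop /eM /=.
  set P := wp w l.
  rewrite eqW_conj; congr addb.
    by rewrite /g mul2n -addnn wp_add -gmulA K_refl gmulA.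
  have -> : ginv (s i) ⊙ (ginv P ⊙ t ⊙ P) ⊙ s i = ginv (P ⊙ s i) ⊙ t ⊙ (P ⊙ s i).
    by rewrite ginvM !gmulA.
  rewrite eqW_conj /g.
  have -> : (2 * l).+1 = l + (1 + l) by rewrite mul2n -addnn add1n addnS.
  rewrite !wp_add [wp w 1]/= gmulr1 -/P.
  congr (eqW t _).
  rewrite ginvM sV (gmulA _ (s i)) -(gmulA P (s i) (s j)) -/w -!gmulA.
  by rewrite K_refl.
rewrite xs_pairs mul2n -addnn xs_period // => e.
by rewrite /g wp_add Hk gmul1.
Qed.

Definition Pt (l : seq L) : W -> bool := (psi mop mone eM l).2.

Lemma Pt_cons a l t : Pt (a :: l) t = eqW t (s a) (+) Pt l (s a ⊙ t ⊙ s a).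
Proof. by rewrite /Pt /= sV. Qed.

Lemma Pt_resp x y : phiL x = phiL y -> Pt x = Pt y.
Proof.
move=> Exy; rewrite /Pt.
rewrite (phi_resp mopA mop1l mop1r eM2 _ Exy) //.
move=> i j k mij; apply: rel_eM.
have H := proj2 (kerP _) (nc_rel mij).
change (psiG (@gmul W) (gone W) s (expG (mulG (alpha i) (alpha j)) k) = gone W) in H.
rewrite (psiG_exp (@gmulA W) (@gmul1 W) sinv) (psiG_mul (@gmulA W) (@gmul1 W) sinv) in H.
by rewrite /psiG /= !gmulr1 in H.
Qed.

End Coxeter.

Section Exchange.
Variable n : nat.
Local Notation L := 'I_n.+1.
Variables (W : group) (s : L -> W) (m : L -> L -> option nat).
Hypothesis sinv : forall i, s i ⊙ s i = gone W.
Hypothesis kerP : forall g, phi s g = gone W <-> nclos m g.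

Local Notation phiL := (phiL s).
Local Notation Pt := (Pt s).

Fixpoint tj (l : seq L) (j : nat) : W :=
  match l with
  | [::] => gone W
  | a :: l' => if j is j'.+1 then s a ⊙ tj l' j' ⊙ s a else s a
  end.

Fixpoint del (l : seq L) (j : nat) : seq L :=
  match l with
  | [::] => [::]
  | a :: l' => if j is j'.+1 then a :: del l' j' else l'
  end.

Lemma Pt_nil t : Pt [::] t = false.
Proof. by []. Qed.

Lemma L1 l t : Pt l t -> exists2 j, j < size l & t = tj l j.
Proof.
elim: l t => [|a l IH] t; first by rewrite Pt_nil.
rewrite (Pt_cons sinv); case: eqWP => [->|_] /=; first by exists 0.
case/IH => j jl Ej; exists j.+1 => //=.
by rewrite -Ej !gmulA sinv gmul1 -gmulA sinv gmulr1.
Qed.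

Lemma L2 l j : j < size l -> tj l j ⊙ phiL l = phiL (del l j).
Proof.
elim: l j => [|a l IH] [|j] //= jl; first by rewrite gmulA sinv gmul1.
rewrite -IH //.
by rewrite -!gmulA (gmulA (s a) (s a)) sinv gmul1.
Qed.

Lemma size_del l j : j < size l -> size (del l j) = (size l).-1.
Proof. by elim: l j => [|a l IH] [|j] //= jl; rewrite IH // prednK //; case: (size l) jl. Qed.

Lemma mem_del l j : {subset del l j <= l}.
Proof.
elim: l j => [|a l IH] [|j] //= c; first by move=> cl; rewrite inE cl orbT.
by rewrite !inE => /orP [->//|/IH ->]; rewrite orbT.
Qed.

Lemma exchange x y a : phiL y = s a ⊙ phiL x ->
  (forall z, phiL z = phiL x -> size y < size z) ->
  exists2 j, j < size x & s a ⊙ phiL x = phiL (del x j).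
Proof.
move=> Ey Hmin.
case Pxa: (Pt x (s a)).
  have [j jx Ej] := L1 Pxa; exists j => //; by rewrite Ej L2.
have E1 : phiL (a :: y) = phiL x by rewrite phiL_cons Ey gmulA sinv gmul1.
have := congr1 (fun f => f (s a)) (Pt_resp sinv kerP E1).
rewrite (Pt_cons sinv) eqWxx Pxa /= -gmulA sinv gmulr1.
move/negbFE; case/L1 => j jy Ej.
have := Hmin (del y j); rewrite -L2 // -Ej Ey gmulA sinv gmul1.
move/(_ erefl); rewrite size_del //.
by case: (size y) jy => // k _ /=; rewrite ltnNge leqnSn.
Qed.

Definition is_red (r : seq L) := forall z, phiL z = phiL r -> size r <= size z.

Lemma red_exists x : exists2 r, phiL r = phiL x & is_red r.
Proof.
suff H : forall N z, size z <= N -> phiL z = phiL x -> exists2 r, phiL r = phiL x & is_red r.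
  exact: (H _ x (leqnn _)).
elim=> [|N IH] z zN Ez.
  exists z => // y _; by move: zN; rewrite leqn0 => /eqP ->.
case: (classic (exists y, phiL y = phiL z /\ size y < size z)).
  case=> y [Ey yz]; apply: (IH y); last by rewrite Ey.
  by rewrite -ltnS (leq_trans yz).
move=> NE; exists z => // y Ey; rewrite leqNgt; apply/negP => yz.
by apply: NE; exists y.
Qed.

Hypothesis F0 : forall (I : {set L}) a x,
  all (fun c => c \in I) x -> phiL x = s a -> a \in I.

Lemma parabolic_red r : is_red r -> forall (I : {set L}) x,
  all (fun c => c \in I) x -> phiL x = phiL r -> all (fun c => c \in I) r.
Proof.
elim: r => // a r IH Hr I x xI Ex /=.
have rr : is_red r.
  move=> z Ez; have := Hr (a :: z); rewrite !phiL_cons Ez /=; exact.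
have E1 : phiL r = s a ⊙ phiL x by rewrite Ex phiL_cons gmulA sinv gmul1.
have [j jx Ej] := exchange E1 (fun z Ez => Hr z (etrans Ez Ex)).
have dI : all (fun c => c \in I) (del x j).
  by apply/allP => c /mem_del cx; move/allP: xI; apply.
apply/andP; split; last first.
  by apply: (IH rr I (del x j) dI); rewrite -Ej -E1.
apply: (F0 (x := del x j ++ rev x)).
  by rewrite all_cat dI all_rev.
by rewrite phiL_cat -Ej (phiL_rev sinv) gmulrK.
Qed.

End Exchange.

Module Geo.
Import GRing.Theory Num.Theory.
Local Open Scope ring_scope.

Section Geo.
Variable n : nat.
Local Notation L := 'I_n.+1.
Variable m : L -> L -> option nat.

Definition rt (k : nat) : algC :=
  match k return algC with 0%N => 1 | k'.+1 => sval (C_prim_root_exists (ltn0Sn k')) end.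
Lemma rt_prim k : (0 < k)%N -> k.-primitive_root (rt k).
Proof. by case: k => // k _; exact: (svalP (C_prim_root_exists _)). Qed.

Definition qm (o : option nat) : algC := if o is Some k then rt k else 1.
Definition qq (i j : L) : algC := if (i < j)%N then qm (m i j) else (qm (m j i))^-1.
Definition aa (i j : L) : algC := if i == j then 2 else - (1 + qq i j).
Definition fl (l : L) (v : L -> algC) : algC := \sum_r aa l r * v r.
Definition sgm (l : L) (v : L -> algC) : L -> algC :=
  fun p => if p == l then v p - fl l v else v p.

Lemma aa_diag i : aa i i = 2.
Proof. by rewrite /aa eqxx. Qed.

Lemma fl_sgm p l v : fl p (sgm l v) = fl p v - aa p l * fl l v.
Proof.
rewrite /fl (bigD1 l) //= [X in _ = X - _](bigD1 l) //= /sgm eqxx.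
rewrite (eq_bigr (fun r => aa p r * v r)); last by move=> r /negbTE ->.
rewrite /fl; ring.
Qed.

Lemma sgm_invol l v : sgm l (sgm l v) = v.
Proof.
apply: functional_extensionality => p.
rewrite {1}/sgm fl_sgm aa_diag; case: eqP => [->|/eqP pl].
  by rewrite /sgm eqxx; ring.
by rewrite /sgm (negbTE pl).
Qed.

Section Pair.
Variables (i j : L) (q : algC) (k : nat).
Hypothesis hij : i != j.
Hypothesis aij : aa i j = - (1 + q).
Hypothesis aji : aa j i = - (1 + q^-1).
Hypothesis hq0 : q != 0.
Hypothesis hq1 : q != 1.
Hypothesis hqk : q ^+ k = 1.

Definition Bm (v : L -> algC) := sgm i (sgm j v).
Definition Ci v := fl i v - 2 * v i - aa i j * v j.
Definition Cj v := fl j v - aa j i * v i - 2 * v j.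
Definition U v := (q - 1) * (v i - v j) - (q * Cj v + Ci v).
Definition U' v := (q^-1 - 1) * (v i - q * v j) - (Cj v + Ci v).

Lemma hji : (j == i) = false.
Proof. by rewrite eq_sym (negbTE hij). Qed.

Lemma Bm_other v p : p != i -> p != j -> Bm v p = v p.
Proof. by move=> /negbTE pi /negbTE pj; rewrite /Bm /sgm pi pj. Qed.
Lemma Bm_i v : Bm v i = v i - (fl i v - aa i j * fl j v).
Proof. by rewrite /Bm /sgm eqxx (negbTE hij) fl_sgm. Qed.
Lemma Bm_j v : Bm v j = v j - fl j v.
Proof. by rewrite /Bm /sgm eqxx hji. Qed.
Lemma Bm_fi v : fl i (Bm v) = - (fl i v - aa i j * fl j v).
Proof. by rewrite /Bm fl_sgm fl_sgm aa_diag; ring. Qed.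
Lemma Bm_fj v : fl j (Bm v) = (fl j v - 2 * fl j v) - aa j i * (fl i v - aa i j * fl j v).
Proof. by rewrite /Bm fl_sgm !fl_sgm aa_diag. Qed.

Lemma Ci_Bm v : Ci (Bm v) = Ci v.
Proof. rewrite /Ci Bm_fi Bm_i Bm_j; ring. Qed.
Lemma Cj_Bm v : Cj (Bm v) = Cj v.
Proof. rewrite /Cj Bm_fj Bm_i Bm_j; ring. Qed.
Lemma U_Bm v : U (Bm v) = q * U v.
Proof. rewrite /U Ci_Bm Cj_Bm /Ci /Cj Bm_i Bm_j aij aji; by field. Qed.
Lemma U'_Bm v : U' (Bm v) = q^-1 * U' v.
Proof. rewrite /U' Ci_Bm Cj_Bm /Ci /Cj Bm_i Bm_j aij aji; by field. Qed.

Lemma Bm_iter t v :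
  [/\ forall p, p != i -> p != j -> iter t Bm v p = v p,
      Ci (iter t Bm v) = Ci v, Cj (iter t Bm v) = Cj v,
      U (iter t Bm v) = q ^+ t * U v & U' (iter t Bm v) = q^-1 ^+ t * U' v].
Proof.
elim: t => [|t [H1 H2 H3 H4 H5]] /=; first by split => //; rewrite mul1r.
split.
- by move=> p pi pj; rewrite Bm_other // H1.
- by rewrite Ci_Bm.
- by rewrite Cj_Bm.
- by rewrite U_Bm H4 exprS mulrA.
- by rewrite U'_Bm H5 exprS mulrA.
Qed.

Lemma Bm_k v : iter k Bm v = v.
Proof.
have [H1 H2 H3 H4 H5] := Bm_iter k v.
rewrite hqk mul1r exprVn hqk invr1 mul1r in H4 H5.
move: H4 H5; rewrite /U /U' H2 H3 => /addIr H4 /addIr H5.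
have q1 : q - 1 != 0 by rewrite subr_eq0.
have q1' : q^-1 - 1 != 0 by rewrite subr_eq0 invr_eq1.
move/(mulfI q1): H4 => H4; move/(mulfI q1'): H5 => H5.
have Hy : iter k Bm v j = v j.
  apply: (mulfI q1).
  have -> : (q - 1) * iter k Bm v j = (iter k Bm v i - iter k Bm v j) - (iter k Bm v i - q * iter k Bm v j) by ring.
  by rewrite H4 H5; ring.
have Hx : iter k Bm v i = v i.
  by have := H4; rewrite Hy => /addIr.
apply: functional_extensionality => p.
case: (eqVneq p i) => [->//|pi]; case: (eqVneq p j) => [->//|pj].
exact: H1.
Qed.
End Pair.

Hypothesis Hm : coxeter_matrix m.

Lemma qq_props i j k : i != j -> m i j = Some k ->
  [/\ aa i j = - (1 + qq i j), aa j i = - (1 + (qq i j)^-1), qq i j != 0,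
      qq i j != 1 & qq i j ^+ k = 1].
Proof.
case: Hm => Hd Hs Hk ij mij.
have k2 := Hk _ _ _ ij mij.
have pr := rt_prim (leq_trans (isT : (0 < 2)%N) k2).
have r0 : rt k != 0 by rewrite (prim_root_eq0 pr); case: k k2 {mij pr} => //.
have r1 : rt k != 1.
  apply/negP => /eqP e; have := prim_order_dvd pr 1; rewrite expr1 e eqxx dvdn1.
  by case: k k2 {mij pr r0 e} => // [] [].
have rk : rt k ^+ k = 1 by exact: prim_expr_order.
rewrite /aa (negbTE ij) eq_sym (negbTE ij) /qq.
case: ltngtP => [lij|lji|eij].
- by rewrite mij /=; split.
- rewrite -(Hs i j) mij /= invrK; split => //.
  + by rewrite invr_eq0.
  + by rewrite invr_eq1.
  + by rewrite exprVn rk invr1.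
- by move: ij; rewrite (val_inj eij) eqxx.
Qed.

Definition Mg := (L -> algC) -> (L -> algC).
Definition gop (F G : Mg) : Mg := fun v => F (G v).
Definition gone_ : Mg := fun v => v.

Lemma iter_gop (B : Mg) t v : iter t (gop B) gone_ v = iter t B v.
Proof. by elim: t => // t IH; exact: (congr1 B IH). Qed.

Lemma rel_sgm i j k : m i j = Some k -> iter k (gop (gop (sgm i) (sgm j))) gone_ = gone_.
Proof.
move=> mij; apply: functional_extensionality => v; rewrite iter_gop.
case: (eqVneq i j) => [eij|ij].
  case: Hm => Hd _ _; move: mij; rewrite eij Hd => -[<-] /=.
  by rewrite /gop sgm_invol.
have [aij aji q0 q1 qk] := qq_props ij mij.
exact: (Bm_k ij aij aji q0 q1 qk).
Qed.

Lemma psi_sgm_keep (I : {set L}) a x v : a \notin I -> all (fun c => c \in I) x ->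
  psi gop gone_ sgm x v a = v a.
Proof.
move=> aI; elim: x => //= c x IH /andP [cI xI].
rewrite /gop {1}/sgm.
have -> : (a == c) = false by apply/negbTE; apply: contraNneq aI => ->.
exact: IH.
Qed.

Lemma F0_geo (W : group) (s : L -> W)
  (sinv : forall i, s i ⊙ s i = gone W)
  (kerP : forall g, phi s g = gone W <-> nclos m g)
  (I : {set L}) a x : all (fun c => c \in I) x -> phiL s x = s a -> a \in I.
Proof.
move=> xI Ex; apply/negPn/negP => aI.
have E : phiL s (x ++ [:: a]) = phiL s [::].
  by rewrite phiL_cat Ex /= gmulr1 sinv.
have e2 : forall l, gop (sgm l) (sgm l) = gone_.
  by move=> l; apply: functional_extensionality => v; rewrite /gop sgm_invol.
have := phi_resp sinv kerP (mop := gop) (mone := gone_) (fun _ _ _ => erefl)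
  (fun _ => erefl) (fun _ => erefl) e2 rel_sgm E.
rewrite (psi_cat (mop := gop) (fun _ _ _ => erefl) (fun _ => erefl)) /=.
pose v : L -> algC := fun p => (p == a)%:R.
move/(congr1 (fun F => F v a)); rewrite /gop /gone_.
rewrite (psi_sgm_keep _ aI xI) /sgm eqxx /v eqxx.
have -> : fl a (fun p => (p == a)%:R) = 2.
  rewrite /fl (bigD1 a) //= eqxx aa_diag big1 ?addr0 ?mulr1 //.
  by move=> r /negbTE ->; rewrite mulr0.
move=> H; change (1 - 2 = 1 :> algC) in H.
have : (2 : algC) = 1 - (1 - 2) by ring.
rewrite H subrr => /eqP.
by rewrite pnatr_eq0.
Qed.

End Geo.

End Geo.
Import Geo.

Section Sub.
Variables (G : group) (S : G -> Prop).
Hypothesis S1 : S (gone G).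
Hypothesis SM : forall x y, S x -> S y -> S (x ⊙ y).
Hypothesis SV : forall x, S x -> S (ginv x).

Lemma coset_shift a b x : S (a ⊙ ginv b) -> S (x ⊙ ginv a) -> S (x ⊙ ginv b).
Proof.
move=> Hab Hx; have := SM Hx Hab.
by rewrite -gmulA gmulKV.
Qed.

Lemma S_swap a b : S (a ⊙ ginv b) -> S (b ⊙ ginv a).
Proof. by move/SV; rewrite ginvM ginvK. Qed.
End Sub.

Section GnGroup.
Variable n : nat.
Local Notation L := 'I_n.+1.

Lemma mulGA (x y z : Gn2 n) : mulG x (mulG y z) = mulG (mulG x y) z.
Proof.
apply: val_inj => /=.
by rewrite foldr_push_assoc ?(svalP z) // foldr_cat.
Qed.
Lemma mulG1 (x : Gn2 n) : mulG (oneG n) x = x.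
Proof. exact: val_inj. Qed.
Lemma mulGV (x : Gn2 n) : mulG (invG x) x = oneG n.
Proof.
apply: val_inj => /=.
rewrite foldl_push foldr_push_assoc ?(svalP x) //.
by rewrite cats0 -{1}(cats0 (sval x)) foldr_push_rev.
Qed.

Definition GG : group := @Defs.Group (Gn2 n) (@mulG n) (oneG n) (@invG n) mulGA mulG1 mulGV.

Lemma mulGrK (x y : Gn2 n) : mulG (mulG x y) (invG y) = x.
Proof. exact: (@gmulrK GG). Qed.
Lemma mulGVr (x : Gn2 n) : mulG x (invG x) = oneG n.
Proof. exact: (@gmulVr GG). Qed.
Lemma mulGr1 (x : Gn2 n) : mulG x (oneG n) = x.
Proof. exact: (@gmulr1 GG). Qed.
Lemma invGM (x y : Gn2 n) : invG (mulG x y) = mulG (invG y) (invG x).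
Proof. exact: (@ginvM GG). Qed.
Lemma invGK (x : Gn2 n) : invG (invG x) = x.
Proof. exact: (@ginvK GG). Qed.
Lemma mulGKV (x y : Gn2 n) : mulG (invG x) (mulG x y) = y.
Proof. exact: (@gmulKV GG). Qed.

Lemma mem_push a (u : seq L) c : c \in push a u -> c \in a :: u.
Proof.
case: u => [|b t] //=; case: eqP => _ H; last by [].
by rewrite !inE H !orbT.
Qed.

Lemma subset_foldr_push (x y : seq L) : {subset foldr (@push n) y x <= x ++ y}.
Proof.
elim: x => //= a x IH c /mem_push; rewrite !inE => /orP [->//|/IH ->].
by rewrite orbT.
Qed.

Lemma inK1 (A : {set L}) : inK A (oneG n). Proof. by []. Qed.
Lemma inKM (A : {set L}) (x y : Gn2 n) : inK A x -> inK A y -> inK A (mulG x y).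
Proof.
move=> /allP Hx /allP Hy; apply/allP => c /subset_foldr_push.
by rewrite mem_cat => /orP [/Hx|/Hy].
Qed.
Lemma inKV (A : {set L}) (x : Gn2 n) : inK A x -> inK A (invG x).
Proof.
move=> /allP Hx; apply/allP => c; rewrite /invG /= foldl_push.
by move/subset_foldr_push; rewrite cats0 mem_rev => /Hx.
Qed.
Lemma inK_alpha (A : {set L}) c : inK A (alpha c) -> c \in A.
Proof. by rewrite /inK /= andbT. Qed.

Lemma cosetK_same (A B : {set L}) (a b : Gn2 n) :
  (forall x, cosetK A a x <-> cosetK B b x) -> A = B /\ inK A (mulG a (invG b)).
Proof.
have key : forall (A B : {set L}) (a b : Gn2 n), (forall x, cosetK A a x <-> cosetK B b x) ->
    A \subset B /\ inK B (mulG a (invG b)).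
  move=> A' B' a' b' E.
  have Hab : inK B' (mulG a' (invG b')).
    apply/E; rewrite /cosetK; have -> : mulG a' (invG a') = oneG n.
      exact: (@gmulVr GG).
    exact: inK1.
  split => //; apply/subsetP => c cA.
  have : cosetK B' b' (mulG (alpha c) a').
    apply/E; rewrite /cosetK.
    have -> : mulG (mulG (alpha c) a') (invG a') = alpha c by exact: (@gmulrK GG).
    by rewrite /inK /= cA.
  rewrite /cosetK => H.
  have := inKM H (inKV Hab).
  by rewrite -[mulG (mulG (alpha c) a') (invG b')]mulGA mulGrK => /inK_alpha.
move=> E; have [s1 H1] := key _ _ _ _ E.
have [s2 _] := key B A b a (fun x => iff_sym (E x)).
have AB : A = B by apply/eqP; rewrite eqEsubset s1 s2.
by split => //; rewrite AB.
Qed.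
End GnGroup.

Section Main.
Variable n : nat.
Local Notation L := 'I_n.+1.
Variables (m : L -> L -> option nat) (W : group) (s : L -> W).
Hypothesis Hm : coxeter_matrix m.
Hypothesis sinv : forall i, s i ⊙ s i = gone W.
Hypothesis surj : forall w : W, exists g, phi s g = w.
Hypothesis kerP : forall g, phi s g = gone W <-> nclos m g.

Local Notation H := (kerphi s).

Lemma phi_mul x y : phi s (mulG x y) = phi s x ⊙ phi s y.
Proof. exact: (psiG_mul (@gmulA W) (@gmul1 W) sinv). Qed.
Lemma phi_one : phi s (oneG n) = gone W.
Proof. by []. Qed.
Lemma phi_inv x : phi s (invG x) = ginv (phi s x).
Proof.
have := phi_mul (invG x) x; rewrite mulGV phi_one => /esym E.
by rewrite -(ginvK (phi s (invG x))) -(ginv_uniq E).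
Qed.

Lemma inWJ_word (J : {set L}) w :
  inWJ s J w <-> exists x, all (fun c => c \in J) x /\ phiL s x = w.
Proof.
split.
  elim=> {w}.
  - by exists [::].
  - by move=> j jJ; exists [:: j]; rewrite /= jJ /=; split => //; rewrite /phiL /psi /= gmulr1.
  - move=> x y _ [a [aJ <-]] _ [b [bJ <-]]; exists (a ++ b).
    by rewrite all_cat aJ bJ phiL_cat.
  - move=> x _ [a [aJ <-]]; exists (rev a); by rewrite all_rev aJ (phiL_rev sinv).
case=> x [xJ <-]; elim: x xJ => [|c x IH] /=; first by move=> _; apply: wj_one.
case/andP => cJ xJ; apply: wj_mul; [exact: wj_gen | exact: IH].
Qed.

Lemma KW (A : {set L}) g : inK A g -> inWJ s A (phi s g).
Proof. by move=> Hg; apply/inWJ_word; exists (sval g). Qed.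

Lemma WK (A : {set L}) w : inWJ s A w -> exists k, inK A k /\ phi s k = w.
Proof.
case/inWJ_word => x [xA <-]; exists (red x); split; last exact: phi_red.
apply/allP => c /subset_foldr_push; rewrite cats0; move/allP: xA; exact.
Qed.

Lemma F0W (A : {set L}) j : inWJ s A (s j) -> j \in A.
Proof. by case/inWJ_word => x [xA Ex]; exact: (F0_geo Hm sinv kerP xA Ex). Qed.

Lemma mc_incl (A : {set L}) (g g' : Gn2 n) (X : Gn2 n -> Prop) :
  inWJ s A (phi s g' ⊙ ginv (phi s g)) ->
  (exists h, H h /\ forall x, X x <-> cosetK A (mulG g h) x) ->
  (exists h, H h /\ forall x, X x <-> cosetK A (mulG g' h) x).
Proof.
move=> /WK [k [kA Ek]] [h [Hh EX]].
exists (mulG (invG g') (mulG k (mulG g h))); split.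
  rewrite /kerphi !phi_mul phi_inv Ek Hh gmulr1.
  by rewrite -!gmulA gmulKV gmulV.
have -> : mulG g' (mulG (invG g') (mulG k (mulG g h))) = mulG k (mulG g h).
  exact: (@gmulVK (GG n)).
have Hab : inK A (mulG (mulG g h) (invG (mulG k (mulG g h)))).
  rewrite invGM mulGA mulGVr mulG1; exact: inKV.
have S1 := inK1 A; have SM := @inKM n A; have SV := @inKV n A.
move=> x; rewrite EX; split => Hx.
  exact: (coset_shift (G := GG n) (S := inK A) SM Hab Hx).
exact: (coset_shift (G := GG n) (S := inK A) SM (S_swap (G := GG n) (S := inK A) SV Hab) Hx).
Qed.

Lemma inWJ_swap (A : {set L}) a b : inWJ s A (a ⊙ ginv b) -> inWJ s A (b ⊙ ginv a).
Proof. apply: S_swap; exact: wj_inv. Qed.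

Lemma mc_eq_iff (J J' : {set L}) g g' :
  mc_eq H J g J' g' <-> J = J' /\ inWJ s (~: J) (phi s g' ⊙ ginv (phi s g)).
Proof.
split.
  move=> E.
  have H0 : multicell H J g (cosetK (~: J) g).
    by exists (oneG n); split => // x; rewrite mulGr1.
  case: (proj1 (E _) H0) => h' [Hh' Ex].
  have [EJ Hk] := cosetK_same Ex.
  split; first exact: setC_inj.
  apply: inWJ_swap; have := KW Hk.
  by rewrite phi_mul phi_inv phi_mul Hh' gmulr1.
case=> <- C X; split; first exact: mc_incl.
apply: mc_incl; exact: inWJ_swap.
Qed.

Lemma vertX_iff (a b : L * Gn2 n) :
  vertX H a b <-> a.1 = b.1 /\ inWJ s (~: [set a.1]) (phi s b.2 ⊙ ginv (phi s a.2)).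
Proof.
rewrite /vertX mc_eq_iff; split; case=> E C; split => //.
- exact: set1_inj.
- by rewrite E.
Qed.

Lemma vertW_iff (a b : L * W) :
  vertW s a b <-> a.1 = b.1 /\ inWJ s (~: [set a.1]) (b.2 ⊙ ginv a.2).
Proof.
case: a b => i w [j w'] /=; split.
  move=> E.
  have H1 : inWJ s (~: [set j]) (w ⊙ ginv w').
    by apply/(E w); rewrite /cosetW gmulVr; apply: wj_one.
  have eij : i = j.
    case: (eqVneq i j) => [//|nij]; exfalso.
    have H2 : inWJ s (~: [set j]) ((s j ⊙ w) ⊙ ginv w').
      apply/(E (s j ⊙ w)); rewrite /cosetW gmulrK; apply: wj_gen.
      by rewrite !inE eq_sym.
    have H3 : inWJ s (~: [set j]) (s j).
      have := wj_mul H2 (wj_inv H1); by rewrite ginvM ginvK -!gmulA gmulKV gmulVr gmulr1.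
    by move: (F0W H3); rewrite !inE eqxx.
  split => //; subst j; exact: inWJ_swap.
case=> <- C x; rewrite /cosetW /=.
have SM : forall x y, inWJ s (~: [set i]) x -> inWJ s (~: [set i]) y -> inWJ s (~: [set i]) (x ⊙ y).
  by move=> ? ? hx hy; apply: wj_mul.
split => Hx.
  exact: (coset_shift SM (inWJ_swap C) Hx).
exact: (coset_shift SM C Hx).
Qed.

Definition Fm (a : L * Gn2 n) : L * W := (a.1, phi s a.2).

Lemma cell_image (J : {set L}) g b :
  (exists2 a, cellX H J g a & vertW s (Fm a) b) <-> cellW s J (phi s g) b.
Proof.
split.
  case=> a [i iJ Ha] Hb; exists i => //.
  have := proj1 (vertX_iff a (i, g)) Ha => -[E1 C].
  have : vertW s (Fm a) (i, phi s g) by apply/vertW_iff.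
  rewrite /vertW => Hc x; rewrite -Hb; exact: Hc.
case=> i iJ Hb; exists (i, g).
  by exists i => //; rewrite /vertX /mc_eq.
by move=> x; rewrite Hb.
Qed.

End Main.

Theorem proposition10 (n : nat) (m : 'I_n.+1 -> 'I_n.+1 -> option nat)
  (W : group) (s : 'I_n.+1 -> W) :
  coxeter_matrix m -> coxeter_system s m ->
  multiplicity_one (kerphi s) /\
  exists F : 'I_n.+1 * Gn2 n -> 'I_n.+1 * W, complex_iso (kerphi s) s F.
Proof.
move=> Hm [sinv surj kerP]; split.
  move=> J g J' g' Ecell; apply/(mc_eq_iff sinv).
  have sub : forall (J J' : {set 'I_n.+1}) g g',
      (forall v, cellX (kerphi s) J g v <-> cellX (kerphi s) J' g' v) ->
      J \subset J' /\ forall i, i \in J ->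
        inWJ s (~: [set i]) (phi s g' ⊙ ginv (phi s g)).
    move=> J1 J2 g1 g2 E.
    have key : forall i, i \in J1 -> i \in J2 /\
        inWJ s (~: [set i]) (phi s g2 ⊙ ginv (phi s g1)).
      move=> i iJ.
      have : cellX (kerphi s) J1 g1 (i, g1) by exists i => //; rewrite /vertX /mc_eq.
      case/E => i' i'J /(vertX_iff sinv) [E' C]; rewrite /= in E' C; rewrite -E' in i'J; by split.
    split; last by move=> i /key [].
    by apply/subsetP => i /key [].
  have [s1 Hi] := sub _ _ _ _ Ecell.
  have [s2 _] := sub J' J g' g (fun v => iff_sym (Ecell v)).
  have EJ : J = J' by apply/eqP; rewrite eqEsubset s1 s2.
  split => //.
  set x := phi s g' ⊙ ginv (phi s g).
  have [g0 Eg0] := surj x.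
  have [r Er rr] := red_exists s (sval g0).
  apply/(inWJ_word sinv); exists r; split; last by rewrite Er.
  apply/allP => c cr; rewrite inE; apply/negP => cJ.
  have := Hi c cJ; case/(inWJ_word sinv) => y [yI Ey].
  have := parabolic_red sinv kerP (F0_geo Hm sinv kerP) rr yI.
  rewrite Ey Er => /(_ (esym Eg0)) /allP /(_ c cr).
  by rewrite !inE eqxx.
exists (Fm s); split.
- move=> a b; split.
    by case/(vertX_iff sinv) => E C; apply/(vertW_iff Hm sinv kerP).
  by case/(vertW_iff Hm sinv kerP) => E C; apply/(vertX_iff sinv).
- case=> j w; have [g Eg] := surj w; exists (j, g); rewrite /Fm /= Eg.
  by move=> x.
- move=> J g; exists J, (phi s g) => b; exact: (cell_image Hm sinv kerP).
- move=> J' w; have [g Eg] := surj w; exists J', g => b.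
  rewrite -Eg; exact: (cell_image Hm sinv kerP).
Qed.
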